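(* Let $f_0,f_1$ be finitely supported probability distributions on $G$ and let $(f_t)_{t\in[0,1]}$ be a $W_1$-geodesic joining them. Let $0\le s\le t\le1$ and let $x,y$ be adjacent vertices such that $x\to y$ for the $W_1$-orientation with respect to $(f_s,f_t)$. Then $x\to y$ for the $W_1$-orientation with respect to $(f_0,f_1)$.
   Context: $G$ is a connected, locally finite graph with graph distance $d$. Paths $\gamma(0),\dots,\gamma(n)$ (consecutive vertices adjacent) have length $L(\gamma)=n$, $e_0(\gamma)=\gamma(0)$, $e_1(\gamma)=\gamma(n)$, and are geodesics if $n=d(\gamma(0),\gamma(n))$. Probability distributions are $f:G\to[0,\infty)$ with $\sum f=1$. For probability distributions $\mu,\nu$: $W_1(\mu,\nu)=\inf_\pi\sum d(x,y)\pi(x,y)$ over couplings $\pi$ (nonnegative functions on $G\times G$ with marginals $\mu,\nu$), $\Pi_1(\mu,\nu)$ is the set of minimizers, $\mathcal{C}(\mu,\nu)=\{(x,y):\pi(x,y)>0\text{ for some }\pi\in\Pi_1(\mu,\nu)\}$, and the $W_1$-orientation with respect to $(\mu,\nu)$ declares $x\to y$ (for adjacent $x,y$) iff there exist a geodesic $\gamma$ with $(e_0(\gamma),e_1(\gamma))\in\mathcal{C}(\mu,\nu)$ and $k$ with $\gamma(k)=x$, $\gamma(k+1)=y$. A $W_1$-geodesic is a family $(f_t)_{t\in[0,1]}$ of probability distributions with $W_1(f_s,f_t)=|t-s|W_1(f_0,f_1)$ for all $s,t\in[0,1]$. *)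

(* Defs.v *)
From HB Require Import structures.
From mathcomp Require Import all_boot all_order all_algebra.
From mathcomp Require Import all_classical all_reals all_analysis.
Set Implicit Arguments. Unset Strict Implicit. Unset Printing Implicit Defensive.
Import Order.TTheory GRing.Theory Num.Theory.
Local Open Scope classical_set_scope.
Local Open Scope ring_scope.

Section W1.
Context {R : realType} {V : choiceType} (adj : V -> V -> Prop).

Fixpoint walk (x : V) (s : seq V) : Prop :=
  match s with
  | [::] => True
  | y :: s' => adj x y /\ walk y s'
  end.

(** graph distance (in extended reals; +oo if no path) *)
Definition gdist (x y : V) : \bar R :=
  ereal_inf [set ((size s)%:R)%:E | s in [set s | walk x s /\ last x s = y]].

Definition is_geodesic (x : V) (s : seq V) : Prop :=
  walk x s /\ ((size s)%:R)%:E = gdist x (last x s).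

Definition locally_finite : Prop := forall x, finite_set [set y | adj x y].
Definition connected_graph : Prop := forall x y, exists s, walk x s /\ last x s = y.

Definition prob_distr (f : V -> R) : Prop :=
  (forall x, 0 <= f x) /\ (\esum_(x in [set: V]) (f x)%:E = 1)%E.

Definition fin_supp (f : V -> R) : Prop := finite_set [set x | f x != 0].

Definition coupling (mu nu : V -> R) (pi : V * V -> R) : Prop :=
  (forall p, 0 <= pi p) /\
  (forall x, \esum_(y in [set: V]) (pi (x, y))%:E = (mu x)%:E) /\
  (forall y, \esum_(x in [set: V]) (pi (x, y))%:E = (nu y)%:E).

Definition transport_cost (pi : V * V -> R) : \bar R :=
  (\esum_(p in [set: V * V]) (gdist p.1 p.2 * (pi p)%:E))%E.

Definition W1 (mu nu : V -> R) : \bar R :=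
  ereal_inf [set transport_cost pi | pi in [set pi | coupling mu nu pi]].

Definition optimal_coupling (mu nu : V -> R) (pi : V * V -> R) : Prop :=
  coupling mu nu pi /\ transport_cost pi = W1 mu nu.

Definition opt_support (mu nu : V -> R) (x y : V) : Prop :=
  exists pi, optimal_coupling mu nu pi /\ 0 < pi (x, y).

(** W1-orientation: x -> y w.r.t. (mu, nu); gamma = u :: s, gamma(k) = nth u (u :: s) k *)
Definition W1_orient (mu nu : V -> R) (x y : V) : Prop :=
  adj x y /\
  exists (u : V) (s : seq V) (k : nat),
    is_geodesic u s /\ opt_support mu nu u (last u s) /\
    (k < size s)%N /\ nth u (u :: s) k = x /\ nth u (u :: s) k.+1 = y.

Definition W1_geodesic (f : R -> V -> R) : Prop :=
  (forall t, (0 <= t <= 1)%R -> prob_distr (f t)) /\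
  (forall s t, (0 <= s <= 1)%R -> (0 <= t <= 1)%R ->
     W1 (f s) (f t) = (`|t - s|%:E * W1 (f 0%R) (f 1%R))%E).

End W1.

(* Main.v *)
Require Import Defs.
From HB Require Import structures.
From mathcomp Require Import all_boot all_order all_algebra.
From mathcomp Require Import all_classical all_reals all_analysis.
From mathcomp Require Import ring lra.
From mathcomp Require finmap.
Import Order.TTheory GRing.Theory Num.Theory.
Local Open Scope classical_set_scope.
Local Open Scope ring_scope.

Module PA.
Local Open Scope ereal_scope.

Section esum_utils.
Context {R : realType}.

Lemma esum_pair (T1 T2 : choiceType) (F : T1 * T2 -> \bar R) :
  (forall k, 0 <= F k) ->
  \esum_(k in [set: T1 * T2]) F k =
  \esum_(i in [set: T1]) \esum_(j in [set: T2]) F (i, j).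
Proof.
move=> F0; rewrite (@esum_esum R T1 T2 setT (fun=> setT) (fun i j => F (i, j))) //.
rewrite (_ : [set: T1] `*`` (fun=> [set: T2]) = [set: T1 * T2]); last first.
  by apply/seteqP; split => // -[].
by apply: eq_esum => -[].
Qed.

Lemma esum_swap (T1 T2 : choiceType) (F : T1 -> T2 -> \bar R) :
  (forall i j, 0 <= F i j) ->
  \esum_(i in [set: T1]) \esum_(j in [set: T2]) F i j =
  \esum_(j in [set: T2]) \esum_(i in [set: T1]) F i j.
Proof.
move=> F0.
rewrite -(@esum_pair T1 T2 (fun k => F k.1 k.2)) //.
rewrite -(@esum_pair T2 T1 (fun k => F k.2 k.1)) //.
rewrite (reindex_esum [set: T2 * T1] [set: T1 * T2] (fun k => (k.2, k.1))) //.
split => //.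
- by move=> [a b] [c d] _ _ [-> ->].
- by move=> [a b] _; exists (b, a).
Qed.

Lemma esumZl (T : choiceType) (I : set T) (c : R) (a : T -> \bar R) :
  (0 <= c)%R -> (forall i, 0 <= a i) ->
  \esum_(i in I) (c%:E * a i) = c%:E * \esum_(i in I) a i.
Proof.
move=> c0 a0; rewrite /esum -ereal_supZl //; last first.
  by apply/set0P; exists 0; exists set0; [exact: fsets_set0|rewrite fsbig_set0].
congr ereal_sup; apply/seteqP; split => z /=.
- move=> [A HA <-]; exists (\sum_(i \in A) a i); first by exists A.
  by rewrite ge0_mule_fsumr.
- move=> [w [A HA <-] <-]; exists A => //; by rewrite ge0_mule_fsumr.
Qed.

Lemma esum_term (T : choiceType) (I : set T) (a : T -> \bar R) i :
  (forall j, 0 <= a j) -> I i -> a i <= \esum_(j in I) a j.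
Proof.
move=> a0 Ii; apply: esum_ge; exists [set i].
  by split; [exact: finite_set1| move=> j ->].
by rewrite fsbig_set1.
Qed.

Lemma esum_eq0_term (T : choiceType) (a : T -> \bar R) i :
  (forall j, 0 <= a j) -> \esum_(j in [set: T]) a j = 0 -> a i = 0.
Proof.
move=> a0 h; apply/eqP; rewrite eq_le a0 andbT.
by rewrite -h; apply: esum_term.
Qed.

Lemma esum_finsupp (T : choiceType) (S : set T) (a : T -> \bar R) :
  finite_set S -> (forall j, 0 <= a j) -> (forall j, ~ S j -> a j = 0) ->
  \esum_(j in [set: T]) a j = \sum_(j <- finmap.enum_fset (fset_set S)) a j.
Proof.
move=> fS a0 aS.
rewrite (_ : \esum_(j in [set: T]) a j = \esum_(j in S) a j).
  by rewrite esum_fset // fsbig_finite.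
rewrite [in RHS]esum_mkcond; apply: eq_esum => j _.
case: ifPn => // /negP jS; rewrite aS //; by move=> Sj; apply: jS; rewrite inE.
Qed.

Lemma esum_single (T : choiceType) (a : T -> \bar R) i0 :
  (forall j, 0 <= a j) -> (forall j, j <> i0 -> a j = 0) ->
  \esum_(j in [set: T]) a j = a i0.
Proof.
move=> a0 ai; rewrite (@esum_finsupp T [set i0] a) //.
  by rewrite fset_set1 finmap.big_seq_fset1.

Qed.

Lemma esum3D (T1 T2 T3 : choiceType) (F G : T1 -> T2 -> T3 -> \bar R) :
  (forall i j k, 0 <= F i j k) -> (forall i j k, 0 <= G i j k) ->
  \esum_(i in [set: T1]) \esum_(j in [set: T2]) \esum_(k in [set: T3]) (F i j k + G i j k) =
  \esum_(i in [set: T1]) \esum_(j in [set: T2]) \esum_(k in [set: T3]) F i j k +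
  \esum_(i in [set: T1]) \esum_(j in [set: T2]) \esum_(k in [set: T3]) G i j k.
Proof.
move=> F0 G0.
have h1 : forall (H : T1 -> T2 -> T3 -> \bar R), (forall i j k, 0 <= H i j k) ->
  forall i, [set: T1] i -> 0 <= \esum_(j in [set: T2]) \esum_(k in [set: T3]) H i j k.
  by move=> H H0 i _; apply: esum_ge0 => j _; apply: esum_ge0 => k _.
rewrite -esumD; [|exact: h1|exact: h1].
apply: eq_esum => i _; rewrite -esumD.
- by apply: eq_esum => j _; rewrite -esumD.
- by move=> j _; apply: esum_ge0 => k _.
- by move=> j _; apply: esum_ge0 => k _.
Qed.

Lemma le_esum3 (T1 T2 T3 : choiceType) (F G : T1 -> T2 -> T3 -> \bar R) :
  (forall i j k, F i j k <= G i j k) ->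
  \esum_(i in [set: T1]) \esum_(j in [set: T2]) \esum_(k in [set: T3]) F i j k <=
  \esum_(i in [set: T1]) \esum_(j in [set: T2]) \esum_(k in [set: T3]) G i j k.
Proof.
move=> FG; apply: le_esum => i _; apply: le_esum => j _; apply: le_esum => k _; exact: FG.
Qed.

End esum_utils.

End PA.
Import PA.

Module PB.
Local Open Scope ereal_scope.

Section graph.
Context {R : realType} {V : choiceType} (adj : V -> V -> Prop).
Hypothesis hconn : connected_graph adj.
Local Notation d := (@gdist R V adj).

Lemma walk_cat x s1 s2 : walk adj x (s1 ++ s2) <-> walk adj x s1 /\ walk adj (last x s1) s2.
Proof.
elim: s1 x => [|z s1 IH] x /=; first by split => // -[].
rewrite IH; tauto.
Qed.

Lemma gdist_le x s : walk adj x s -> d x (last x s) <= (size s)%:R%:E.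
Proof. by move=> w; apply: ereal_inf_lbound; exists s. Qed.

Lemma gdist_geo x y : exists s, [/\ walk adj x s, last x s = y & d x y = (size s)%:R%:E].
Proof.
pose P n := `[< exists s, [/\ walk adj x s, last x s = y & size s = n] >].
have exP : exists n, P n.
  have [s [ws ls]] := hconn x y; exists (size s); apply/asboolP; by exists s.
case: (ex_minnP exP) => m /asboolP [s [ws ls sm]] mmin.
exists s; split => //; apply/eqP; rewrite eq_le; apply/andP; split.
  by rewrite -ls gdist_le.
apply: le_ereal_inf_tmp => _ [s' [ws' ls'] <-].
rewrite lee_fin ler_nat sm; apply: mmin; apply/asboolP; by exists s'.
Qed.

Lemma gdist_nat x y : exists n : nat, d x y = n%:R%:E.
Proof. by have [s [_ _ ->]] := gdist_geo x y; exists (size s). Qed.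

Lemma gdist_ge0 x y : 0 <= d x y.
Proof. by have [n ->] := gdist_nat x y; rewrite lee_fin. Qed.

Lemma gdist_fin x y : d x y = (fine (d x y))%:E.
Proof. by have [n ->] := gdist_nat x y. Qed.

Lemma gdist_triangle x y z : d x z <= d x y + d y z.
Proof.
have [s1 [w1 l1 ->]] := gdist_geo x y.
have [s2 [w2 l2 ->]] := gdist_geo y z.
have w : walk adj x (s1 ++ s2) by apply/walk_cat; rewrite l1.
have := @gdist_le x (s1 ++ s2) w; rewrite last_cat l1 l2 size_cat natrD EFinD; exact.
Qed.

End graph.

Section geo.
Context {R : realType} {V : choiceType} (adj : V -> V -> Prop).
Local Notation d := (@gdist R V adj).

Lemma geo_concat a u p b sa sb :
  walk adj a sa -> last a sa = u -> d a u = (size sa)%:R%:E ->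
  is_geodesic (R:=R) adj u p ->
  walk adj (last u p) sb -> last (last u p) sb = b ->
  d (last u p) b = (size sb)%:R%:E ->
  d a b = d a u + d u (last u p) + d (last u p) b ->
  [/\ is_geodesic (R:=R) adj a (sa ++ p ++ sb), last a (sa ++ p ++ sb) = b &
   forall j, (j <= size p)%N -> nth a (a :: sa ++ p ++ sb) (size sa + j)%N = nth u (u :: p) j].
Proof.
move=> wa la da [wp dp] wb lb db dab.
have lq : last a (sa ++ p ++ sb) = b by rewrite !last_cat la.
split => //.
- split; first by apply/walk_cat; split => //; rewrite la; apply/walk_cat; split.
  rewrite lq dab da -dp db !size_cat !natrD !EFinD addeA //.
- move=> j hj.
  have -> : a :: sa ++ p ++ sb = (belast a sa) ++ (u :: p) ++ sb.
    by rewrite -la -cat_rcons -lastI.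
  idtac.

  rewrite nth_cat size_belast ltnNge leq_addr /= addKn -cat_cons nth_cat /= ltnS hj.
  by apply: set_nth_default; rewrite /= ltnS.
Qed.

End geo.

End PB.
Import PB.

Module PC.


Local Open Scope ereal_scope.

Section coupling_facts.
Context {R : realType} {V : choiceType}.

Lemma coupling_row0 {mu nu : V -> R} {pp : V * V -> R} {x y : V} :
  coupling mu nu pp -> mu x = 0%R -> pp (x, y) = 0%R.
Proof.
move=> [p0 [r c]] mx; have := r x; rewrite mx => h.
have := @esum_eq0_term R V (fun y => (pp (x, y))%:E) y.
by move=> /(_ (fun j => p0 _)) /(_ h) [].
Qed.

Lemma coupling_col0 {mu nu : V -> R} {pp : V * V -> R} {x y : V} :
  coupling mu nu pp -> nu y = 0%R -> pp (x, y) = 0%R.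
Proof.
move=> [p0 [r c]] ny; have := c y; rewrite ny => h.
have := @esum_eq0_term R V (fun x => (pp (x, y))%:E) x.
by move=> /(_ (fun j => p0 _)) /(_ h) [].
Qed.

Lemma divMr_cancel (x y z : R) : y != 0%R -> (z / (x * y) * y = z / x)%R.
Proof.
by move=> y0; rewrite invfM mulrA -mulrA mulVf ?mulr1.
Qed.

Lemma divMl_cancel (x y z : R) : x != 0%R -> (z / (x * y) * x = z / y)%R.
Proof. by move=> x0; rewrite [(x * y)%R]mulrC divMr_cancel. Qed.

End coupling_facts.

Ltac nng := intros; rewrite ?lee_fin;
  repeat (first [done | apply: mulr_ge0 | apply: divr_ge0 | rewrite invr_ge0]).

Section glue.
Context {R : realType} {V : choiceType}.
Variables (g0 gs gt g1 : V -> R) (p1 p2 p3 : V * V -> R).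
Hypothesis gs0 : forall x, (0 <= gs x)%R.
Hypothesis gt0 : forall x, (0 <= gt x)%R.
Hypothesis c1 : coupling g0 gs p1.
Hypothesis c2 : coupling gs gt p2.
Hypothesis c3 : coupling gt g1 p3.

Let p10 q : (0 <= p1 q)%R := c1.1 q.
Let p20 q : (0 <= p2 q)%R := c2.1 q.
Let p30 q : (0 <= p3 q)%R := c3.1 q.

Definition gw (a b : V) (q : V * V) : R :=
  (p1 (a, q.1) * p2 q * p3 (q.2, b) / (gs q.1 * gt q.2))%R.

Lemma gw_ge0 a b q : (0 <= gw a b q)%R.
Proof.
by rewrite /gw !mulr_ge0 // invr_ge0 mulr_ge0.
Qed.

Ltac gpos := intros; repeat (first [done | apply: esum_ge0 => * | rewrite lee_fin | apply: gw_ge0]).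

Lemma gw_M1 a u' :
  \esum_(v' in [set: V]) \esum_(b in [set: V]) (gw a b (u', v'))%:E = (p1 (a, u'))%:E.
Proof.
transitivity (\esum_(v' in [set: V]) ((p1 (a, u') / gs u') * p2 (u', v'))%:E).
  apply: eq_esum => v' _.
  rewrite (eq_esum (b := fun b => ((p1 (a, u') * p2 (u', v') / (gs u' * gt v'))%:E * (p3 (v', b))%:E))); last first.
    by move=> b _; rewrite -EFinM /gw /= mulrAC.
  rewrite esumZl; [|nng|nng].
  rewrite c3.2.1 -EFinM; congr (_%:E).
  have [e|gv0] := eqVneq (gt v') 0%R.
    by rewrite e (coupling_col0 c2) // !mulr0.
  by rewrite divMr_cancel // mulrAC.
under eq_esum do rewrite EFinM.
rewrite esumZl; [|nng|nng].
rewrite c2.2.1 -EFinM; congr (_%:E).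
have [gu0|gu0] := eqVneq (gs u') 0%R.
  by rewrite gu0 mulr0 (coupling_col0 c1) // !mul0r.
by rewrite -mulrA mulVf ?mulr1.
Qed.

Lemma gw_M3 v' b :
  \esum_(u' in [set: V]) \esum_(a in [set: V]) (gw a b (u', v'))%:E = (p3 (v', b))%:E.
Proof.
transitivity (\esum_(u' in [set: V]) ((p3 (v', b) / gt v') * p2 (u', v'))%:E).
  apply: eq_esum => u' _.
  rewrite (eq_esum (b := fun a => ((p2 (u', v') * p3 (v', b) / (gs u' * gt v'))%:E * (p1 (a, u'))%:E))); last first.
    by move=> a _; rewrite -EFinM /gw /=; congr (_%:E); ring.
  rewrite esumZl; [|nng|nng].
  rewrite c1.2.2 -EFinM; congr (_%:E).
  have [e|gu0] := eqVneq (gs u') 0%R.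
    by rewrite e (coupling_row0 c2) // !(mulr0, mul0r).
  rewrite divMl_cancel //; ring.
under eq_esum do rewrite EFinM.
rewrite esumZl; [|nng|nng].
rewrite c2.2.2 -EFinM; congr (_%:E).
have [e|gv0] := eqVneq (gt v') 0%R.
  by rewrite e mulr0 (coupling_row0 c3) // !mul0r.
by rewrite -mulrA mulVf ?mulr1.
Qed.

Lemma gw_M2 q :
  \esum_(a in [set: V]) \esum_(b in [set: V]) (gw a b q)%:E = (p2 q)%:E.
Proof.
case: q => u' v'.
transitivity (\esum_(a in [set: V]) ((p2 (u', v') / gs u') * p1 (a, u'))%:E).
  apply: eq_esum => a _.
  rewrite (eq_esum (b := fun b => ((p1 (a, u') * p2 (u', v') / (gs u' * gt v'))%:E * (p3 (v', b))%:E))); last first.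
    by move=> b _; rewrite -EFinM /gw /=; congr (_%:E); ring.
  rewrite esumZl; [|nng|nng].
  rewrite c3.2.1 -EFinM; congr (_%:E).
  have [e|gv0] := eqVneq (gt v') 0%R.
    by rewrite e (coupling_col0 c2) // !(mulr0, mul0r).
  rewrite divMr_cancel //; ring.
under eq_esum do rewrite EFinM.
rewrite esumZl; [|nng|nng].
rewrite c1.2.2 -EFinM; congr (_%:E).
have [e|gu0] := eqVneq (gs u') 0%R.
  by rewrite e mulr0 (coupling_row0 c2) // !mul0r.
by rewrite -mulrA mulVf ?mulr1.
Qed.

Definition gG a b : \bar R := \esum_(q in [set: V * V]) (gw a b q)%:E.

Lemma gG_row a : \esum_(b in [set: V]) gG a b = (g0 a)%:E.
Proof.
rewrite /gG esum_swap; last by gpos.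
rewrite esum_pair; last by gpos.
under eq_esum do rewrite gw_M1.
exact: c1.2.1.
Qed.

Lemma gG_col b : \esum_(a in [set: V]) gG a b = (g1 b)%:E.
Proof.
rewrite /gG esum_swap; last by gpos.
rewrite esum_pair; last by gpos.
rewrite esum_swap; last by gpos.
under eq_esum do rewrite gw_M3.
exact: c3.2.2.
Qed.

Variable adj : V -> V -> Prop.
Hypothesis hconn : connected_graph adj.
Local Notation d := (@gdist R V adj).
Variables u0 v0 : V.

Definition gbad a b : bool := d a b != d a u0 + d u0 v0 + d v0 b.
Definition Qf a b q : \bar R := (gw a b q)%:E.

Let dfin x y : d x y = (fine (d x y))%:E := gdist_fin adj hconn x y.
Let dge0 x y : 0 <= d x y := gdist_ge0 adj hconn x y.
Let fdge0 x y : (0 <= fine (d x y))%R.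
Proof. by rewrite -lee_fin -dfin. Qed.

Ltac cpos := intros; repeat (first [done | apply: esum_ge0 => * | apply: mule_ge0 | apply: adde_ge0 | apply: dge0
  | apply: fdge0 | rewrite lee_fin | apply: gw_ge0 | case: ifP => _ ]).

Lemma T1E : transport_cost adj p1 =
  \esum_(a in [set: V]) \esum_(b in [set: V]) \esum_(q in [set: V * V]) (d a q.1 * Qf a b q).
Proof.
rewrite /transport_cost esum_pair; [|cpos].
apply: eq_esum => a _ /=.
rewrite esum_swap; [|cpos].
rewrite esum_pair; [|cpos].
apply: eq_esum => u' _ /=.
transitivity ((fine (d a u'))%:E * \esum_(v' in [set: V]) \esum_(b in [set: V]) Qf a b (u', v')).
  by rewrite /Qf gw_M1 -dfin.
rewrite -esumZl; [|cpos|cpos].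
apply: eq_esum => v' _; rewrite -esumZl; [|cpos|cpos].
by apply: eq_esum => b _; rewrite -dfin.
Qed.

Lemma T2E : transport_cost adj p2 =
  \esum_(a in [set: V]) \esum_(b in [set: V]) \esum_(q in [set: V * V]) (d q.1 q.2 * Qf a b q).
Proof.
transitivity (\esum_(a in [set: V]) \esum_(q in [set: V * V]) \esum_(b in [set: V]) (d q.1 q.2 * Qf a b q)); last first.
  by apply: eq_esum => a _; rewrite esum_swap; [|cpos].
rewrite esum_swap; [|cpos].
rewrite /transport_cost; apply: eq_esum => q _.
transitivity ((fine (d q.1 q.2))%:E * \esum_(a in [set: V]) \esum_(b in [set: V]) Qf a b q).
  by rewrite /Qf gw_M2 -dfin.
rewrite -esumZl; [|cpos|cpos].
apply: eq_esum => a _; rewrite -esumZl; [|cpos|cpos].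
by apply: eq_esum => b _; rewrite -dfin.
Qed.

Lemma T3E : transport_cost adj p3 =
  \esum_(a in [set: V]) \esum_(b in [set: V]) \esum_(q in [set: V * V]) (d q.2 b * Qf a b q).
Proof.
rewrite esum_swap; [|cpos].
rewrite /transport_cost esum_pair; [|cpos].
rewrite esum_swap; [|cpos].
apply: eq_esum => b _ /=.
transitivity (\esum_(a in [set: V]) \esum_(v' in [set: V]) \esum_(u' in [set: V]) (d v' b * Qf a b (u', v'))); last first.
  apply: eq_esum => a _; rewrite esum_pair; [|cpos].
  by rewrite esum_swap; [|cpos].
rewrite esum_swap; [|cpos].
apply: eq_esum => v' _ /=.
transitivity ((fine (d v' b))%:E * \esum_(u' in [set: V]) \esum_(a in [set: V]) Qf a b (u', v')).
  by rewrite /Qf gw_M3 -dfin.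
rewrite esum_swap; [|cpos].
rewrite -esumZl; [|cpos|cpos].
apply: eq_esum => a _; rewrite -esumZl; [|cpos|cpos].
by apply: eq_esum => u' _; rewrite -dfin.
Qed.

Lemma real_aux (nab n : nat) (w : R) : (0 <= w)%R -> (nab <= n)%N ->
  (nab%:R * w + (if nab != n then w else 0) <= n%:R * w)%R.
Proof.
move=> w0 le; case: ifP => h.
  have lt : (nab.+1 <= n)%N by rewrite ltn_neqAle h le.
  rewrite -[X in (_ + X)%R]mul1r -mulrDl natr1 ler_wpM2r // ler_nat.
  exact: lt.
by rewrite addr0 ler_wpM2r // ler_nat.
Qed.

Lemma pt_ineq a b q :
  d a b * Qf a b q + (if q == (u0, v0) then (if gbad a b then Qf a b q else 0) else 0)
  <= d a q.1 * Qf a b q + d q.1 q.2 * Qf a b q + d q.2 b * Qf a b q.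
Proof.
have tri : d a b <= d a q.1 + d q.1 q.2 + d q.2 b.
  have t1 := @gdist_triangle R V adj hconn a q.1 b.
  have t2 := @gdist_triangle R V adj hconn q.1 q.2 b.
  apply: (le_trans t1); rewrite -addeA; exact: leeD.
have [nab eab] := @gdist_nat R V adj hconn a b.
have [n1 e1] := @gdist_nat R V adj hconn a q.1.
have [n2 e2] := @gdist_nat R V adj hconn q.1 q.2.
have [n3 e3] := @gdist_nat R V adj hconn q.2 b.
rewrite eab e1 e2 e3 -!EFinD lee_fin -!natrD ler_nat in tri.
rewrite /Qf.
case: eqP => [eq|_].
  rewrite /gbad -[u0]/((u0, v0).1) -[v0]/((u0, v0).2) -eq eab e1 e2 e3.
  rewrite -!EFinD (_ : ((nab%:R)%:E != ((n1%:R + n2%:R + n3%:R)%R)%:E) = (nab != (n1 + n2 + n3)%N)); last first.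
    by rewrite eqe -!natrD eqr_nat.
  rewrite (_ : (if nab != (n1 + n2 + n3)%N then (gw a b q)%:E else 0) =
     (if nab != (n1 + n2 + n3)%N then gw a b q else 0%R)%:E); last by case: ifP.
  rewrite -!EFinM -!EFinD lee_fin -!mulrDl -!natrD.
  by apply: real_aux => //; exact: gw_ge0.
rewrite eab e1 e2 e3 adde0 -!EFinM -!EFinD lee_fin -!mulrDl -!natrD.
by rewrite ler_wpM2r // ?ler_nat //; exact: gw_ge0.
Qed.

Lemma glue_cost :
  \esum_(k in [set: V * V]) (d k.1 k.2 * gG k.1 k.2) +
  \esum_(k in [set: V * V]) (if gbad k.1 k.2 then Qf k.1 k.2 (u0, v0) else 0)
  <= transport_cost adj p1 + transport_cost adj p2 + transport_cost adj p3.
Proof.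
rewrite T1E T2E T3E -!esum3D; [|cpos..].
have -> : \esum_(k in [set: V * V]) (d k.1 k.2 * gG k.1 k.2) =
  \esum_(a in [set: V]) \esum_(b in [set: V]) \esum_(q in [set: V * V]) (d a b * Qf a b q).
  rewrite esum_pair; [|cpos].
  apply: eq_esum => a _; apply: eq_esum => b _ /=.
  rewrite /gG dfin -esumZl; [|cpos|cpos].
  by apply: eq_esum => q _; rewrite -dfin.
have -> : \esum_(k in [set: V * V]) (if gbad k.1 k.2 then Qf k.1 k.2 (u0, v0) else 0) =
  \esum_(a in [set: V]) \esum_(b in [set: V]) \esum_(q in [set: V * V])
     (if q == (u0, v0) then (if gbad a b then Qf a b q else 0) else 0).
  rewrite esum_pair; [|cpos].
  apply: eq_esum => a _; apply: eq_esum => b _ /=.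
  rewrite (@esum_single R _ _ (u0, v0)); [by rewrite eqxx| cpos |].
  by move=> j /eqP /negPf ->.
rewrite -esum3D; [|cpos..].
apply: le_esum3 => a b q; exact: pt_ineq.

Qed.

End glue.

End PC.
Import PC.

Module PE.

Import numFieldNormedType.Exports.

Section limits.
Context {R : realType}.

Lemma ge_id (psi : nat -> nat) : (forall n, psi n < psi n.+1)%N -> forall n, (n <= psi n)%N.
Proof. by move=> h; elim => // n IH; apply: leq_ltn_trans IH (h n). Qed.

Lemma sub_cvg (u : nat -> R) (psi : nat -> nat) (l : R) :
  (forall n, psi n < psi n.+1)%N -> u n @[n --> \oo] --> l -> u (psi n) @[n --> \oo] --> l.
Proof.
move=> hp hl; apply: (cvg_comp psi u) hl.
move=> P [N _ HP]; exists N => // n /= Nn; apply: HP.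
by rewrite /= (leq_trans Nn) // ge_id.
Qed.

Lemma multi_bw (X : eqType) (r : seq X) (g : nat -> X -> R) (M : R) :
  (forall n x, `|g n x| <= M) ->
  exists psi : nat -> nat, (forall n, psi n < psi n.+1)%N /\
    forall x, x \in r -> cvgn (fun n => g (psi n) x).
Proof.
move=> hb; elim: r => [|x r [psi [hpsi hc]]].
  by exists id; split.
have bnd : bounded_fun (fun n => g (psi n) x).
  exists M; split; first by rewrite num_real.
  move=> N MN n _; apply: (le_trans (hb _ _)); exact: ltW.
have [phi hphi cphi] := bolzano_weierstrass bnd.
have hphi' : forall n, (phi n < phi n.+1)%N.
  by move=> n; have := (increasing_seqP phi).2 hphi n; rewrite ltEnat.
exists (psi \o phi); split.
  move=> n /=; apply: (@leq_trans (psi (phi n).+1)); first exact: hpsi.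
  have : ((phi n).+1 <= phi n.+1)%N by exact: hphi'.
  elim: (phi n.+1) => [|m IH]; first by rewrite ltn0.
  rewrite leq_eqVlt => /orP[/eqP [->] //|]; rewrite ltnS => /IH h.
  by apply: leq_trans h _; apply: ltnW.
move=> y; rewrite in_cons => /orP[/eqP ->|yr]; first exact: cphi.
have := hc y yr => /cvg_ex [l hl]; apply/cvg_ex; exists l.
exact: (@sub_cvg (fun n => g (psi n) y) phi l hphi' hl).
Qed.

Lemma cvg_sum_seq (I : eqType) (r : seq I) (F : I -> nat -> R) (L : I -> R) :
  (forall i, i \in r -> F i n @[n --> \oo] --> L i) ->
  (\sum_(i <- r) F i n) @[n --> \oo] --> \sum_(i <- r) L i.
Proof.
elim: r => [|i r IH] h.
  under eq_fun do rewrite big_nil; rewrite big_nil; exact: cvg_cst.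
under eq_fun do rewrite big_cons; rewrite big_cons.
apply: cvgD; first by apply: h; rewrite mem_head.
by apply: IH => j hj; apply: h; rewrite in_cons hj orbT.
Qed.

Lemma le_from_eps (x y : R) : (forall k : nat, x <= y + k.+1%:R^-1) -> x <= y.
Proof.
move=> h; apply/ler_addgt0Pr => e e0.
have ei : 0 <= e^-1 by rewrite invr_ge0 ltW.
have hk := archi_boundP ei.
apply: (le_trans (h (Num.Def.archi_bound e^-1))); rewrite lerD2l.
rewrite -[leRHS]invrK lef_pV2 ?posrE ?invr_gt0 // ?ltr0n //.
by apply: ltW; apply: (lt_trans hk); rewrite ltr_nat.
Qed.

Lemma extract (V : choiceType) (r0 r1 : seq V) (h0 h1 : V -> R) (c : V -> V -> R)
  (B : V -> V -> bool) (Dr m : R) (ga : nat -> V -> V -> R) :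
  (forall n a b, 0 <= ga n a b <= 1) ->
  (forall n a, a \in r0 -> \sum_(b <- r1) ga n a b = h0 a) ->
  (forall n b, b \in r1 -> \sum_(a <- r0) ga n a b = h1 b) ->
  (forall n, \sum_(a <- r0) \sum_(b <- r1) c a b * ga n a b <= Dr + n.+1%:R^-1) ->
  (forall n, m <= \sum_(a <- r0) \sum_(b <- r1) (if B a b then 0 else ga n a b) + n.+1%:R^-1) ->
  exists g : V -> V -> R,
    [/\ forall a b, a \in r0 -> b \in r1 -> 0 <= g a b,
        forall a, a \in r0 -> \sum_(b <- r1) g a b = h0 a,
        forall b, b \in r1 -> \sum_(a <- r0) g a b = h1 b,
        \sum_(a <- r0) \sum_(b <- r1) c a b * g a b <= Dr &
        m <= \sum_(a <- r0) \sum_(b <- r1) (if B a b then 0 else g a b)].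
Proof.
move=> hb hrow hcol hcost hgood.
have [psi [hpsi hc]] := @multi_bw _ [seq (a, b) | a <- r0, b <- r1]
  (fun n k => ga n k.1 k.2) 1 (fun n k => ltac:(have /andP[q1 q2] := hb n k.1 k.2; by rewrite ger0_norm)).
pose g a b := lim (ga (psi n) a b @[n --> \oo]).
have hg a b : a \in r0 -> b \in r1 -> ga (psi n) a b @[n --> \oo] --> g a b.
  move=> ha hb'; have := hc (a, b); rewrite /=; apply.
  by apply/allpairsP; exists (a, b).
have hsum (F : V -> V -> R -> R) : (forall a b, continuous (F a b)) ->
    (\sum_(a <- r0) \sum_(b <- r1) F a b (ga (psi n) a b)) @[n --> \oo] -->
    \sum_(a <- r0) \sum_(b <- r1) F a b (g a b).
  move=> Fc; apply: cvg_sum_seq => a ha; apply: cvg_sum_seq => b hb'.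
  apply: (@continuous_cvg _ _ _ _ _ (fun n => ga (psi n) a b) (F a b)); first exact: Fc.
  exact: hg.
exists g; split.
- move=> a b ha hb'; apply: limr_ge; first exact: hg.
  by exists 0%N => // n _; have /andP[] := hb (psi n) a b.
- move=> a ha.
  have h := @cvg_sum_seq _ r1 (fun b n => ga (psi n) a b) (g a) (fun b hb' => hg a b ha hb').
  rewrite -(cvg_lim _ h) //.
  under eq_fun do rewrite hrow //.
  by rewrite lim_cst.
- move=> b hb'.
  have h := @cvg_sum_seq _ r0 (fun a n => ga (psi n) a b) (g^~ b) (fun a ha => hg a b ha hb').
  rewrite -(cvg_lim _ h) //.
  under eq_fun do rewrite hcol //.
  by rewrite lim_cst.
- have h := hsum (fun a b x => c a b * x) (fun a b => ltac:(move=> x; apply: cvgMl_tmp; exact: cvg_id)).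
  apply: le_from_eps => k.
  rewrite -(cvg_lim _ h) //; apply: limr_le; first by apply/cvg_ex; eexists; exact: h.
  exists k => // n /= kn; apply: (le_trans (hcost (psi n))).
  rewrite lerD2l lef_pV2 ?posrE ?ltr0n // ler_nat ltnS.
  by apply: leq_trans kn _; apply: ge_id.
- have Fc2 : forall a b, continuous (fun x : R => if B a b then 0 else x).
    by move=> a b; case: (B a b) => x; [exact: cvg_cst | exact: cvg_id].
  have h := hsum (fun a b x => if B a b then 0 else x) Fc2.
  apply: le_from_eps => k.
  rewrite -(cvg_lim _ h) // -lerBlDr.
  apply: limr_ge; first by apply/cvg_ex; eexists; exact: h.
  exists k => // n /= kn; rewrite lerBlDr; apply: (le_trans (hgood (psi n))).
  rewrite lerD2l lef_pV2 ?posrE ?ltr0n // ler_nat ltnS.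
  by apply: leq_trans kn _; apply: ge_id.
Qed.

End limits.

End PE.
Import PE.

Module PM.
Import finmap.

Lemma mem_en (V : choiceType) (S : set V) a : finite_set S -> (a \in (finmap.enum_fset (fset_set S))) <-> S a.
Proof.
move=> fS; have h := in_fset_set fS a.
rewrite (_ : (a \in enum_fset (fset_set S)) = (a \in fset_set S)) // h.
by split; [move/set_mem | move/mem_set].
Qed.

End PM.
Import PM.

Module PF.


Import numFieldNormedType.Exports.
Local Open Scope ereal_scope.

Notation en S := (finmap.enum_fset (fset_set S)).

Section main_lemmas.
Context {R : realType} {V : choiceType} (adj : V -> V -> Prop).
Hypothesis hconn : connected_graph adj.
Local Notation d := (@gdist R V adj).


Lemma prob_le1 (g : V -> R) : prob_distr g -> forall x, (g x <= 1)%R.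
Proof.
move=> [g0 g1] x; rewrite -lee_fin -g1.
by apply: (@esum_term R V [set: V] (fun x => (g x)%:E)) => // j; rewrite lee_fin.
Qed.

Lemma esum_pair_fin (S0 S1 : set V) (F : V * V -> \bar R) :
  finite_set S0 -> finite_set S1 -> (forall k, 0 <= F k) ->
  (forall a b, ~ S0 a -> F (a, b) = 0) -> (forall a b, ~ S1 b -> F (a, b) = 0) ->
  \esum_(k in [set: V * V]) F k = \sum_(a <- en S0) \sum_(b <- en S1) F (a, b).
Proof.
move=> f0 f1 F0 h0 h1.
rewrite esum_pair //.
rewrite (@esum_finsupp R V S0 (fun a => \esum_(b in [set: V]) F (a, b))) //.
- apply: eq_bigr => a _; rewrite (@esum_finsupp R V S1 (fun b => F (a, b))) // => b; exact: h1.
- by move=> a; apply: esum_ge0.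
- by move=> a Sa; apply: esum1 => b _; exact: h0.
Qed.

Lemma supp_fin (g : V -> R) : fin_supp g -> finite_set [set x | g x != 0%R].
Proof. by []. Qed.

Lemma W1_ge0 (mu nu : V -> R) : 0 <= W1 adj mu nu.
Proof.
apply: le_ereal_inf_tmp => _ [pp [p0 _] <-].
apply: esum_ge0 => k _; apply: mule_ge0; [exact: gdist_ge0 | by rewrite lee_fin].
Qed.

Lemma W1_fin (g0 g1 : V -> R) : prob_distr g0 -> prob_distr g1 ->
  fin_supp g0 -> fin_supp g1 -> W1 adj g0 g1 \is a fin_num.
Proof.
move=> [p0 e0] [p1 e1] fs0 fs1.
pose pr (k : V * V) := (g0 k.1 * g1 k.2)%R.
have cpl : coupling g0 g1 pr.
  split; first by move=> k; rewrite mulr_ge0.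
  split.
  - move=> a; rewrite /pr /=.
    under eq_esum do rewrite EFinM.
    by rewrite esumZl // ?e1 ?mule1 // => j; rewrite lee_fin.
  - move=> b; rewrite /pr /=.
    under eq_esum do rewrite EFinM muleC.
    by rewrite esumZl // ?e0 ?mule1 // => j; rewrite lee_fin.
have le : W1 adj g0 g1 <= transport_cost adj pr by apply: ereal_inf_lbound; exists pr.
rewrite ge0_fin_numE ?W1_ge0 //; apply: (le_lt_trans le).
rewrite /transport_cost (esum_pair_fin _ _ _ fs0 fs1).
- rewrite (_ : \sum_(a <- _) \sum_(b <- _) _ = (\sum_(a <- en [set x | g0 x != 0%R]) \sum_(b <- en [set x | g1 x != 0%R])
     (fine (d a b) * pr (a, b)))%:E).
    exact: ltry.
  rewrite -sumEFin; apply: eq_bigr => a _; rewrite -sumEFin; apply: eq_bigr => b _.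
  by rewrite [RHS]EFinM -(gdist_fin adj hconn).
- by move=> k; apply: mule_ge0; [exact: gdist_ge0|rewrite lee_fin mulr_ge0].
- by move=> a b /= /negP; rewrite negbK /pr => /eqP ->; rewrite mul0r mule0.
- by move=> a b /= /negP; rewrite negbK /pr => /eqP ->; rewrite mulr0 mule0.
Qed.

End main_lemmas.

Section approx.
Context {R : realType} {V : choiceType} (adj : V -> V -> Prop).
Hypothesis hconn : connected_graph adj.
Local Notation d := (@gdist R V adj).
Variables (g0 gs gt g1 : V -> R).
Hypotheses (pg0 : prob_distr g0) (pgs : prob_distr gs) (pgt : prob_distr gt) (pg1 : prob_distr g1).
Hypotheses (fs0 : fin_supp g0) (fs1 : fin_supp g1).
Variables (Dr al be ce : R).
Hypothesis hsum : (al + be + ce = 1)%R.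
Hypothesis hD : W1 adj g0 g1 = Dr%:E.
Hypothesis h1 : W1 adj g0 gs = (al * Dr)%:E.
Hypothesis h3 : W1 adj gt g1 = (ce * Dr)%:E.
Variable p2 : V * V -> R.
Hypothesis hp2 : optimal_coupling adj gs gt p2.
Hypothesis h2 : W1 adj gs gt = (be * Dr)%:E.
Variables u0 v0 : V.

Let S0 := [set x | g0 x != 0%R].
Let S1 := [set x | g1 x != 0%R].

Lemma approx (n : nat) : exists gam : V -> V -> R,
  [/\ forall a b, (0 <= gam a b <= 1)%R,
      forall a, a \in en S0 -> (\sum_(b <- en S1) gam a b = g0 a)%R,
      forall b, b \in en S1 -> (\sum_(a <- en S0) gam a b = g1 b)%R,
      (\sum_(a <- en S0) \sum_(b <- en S1) fine (d a b) * gam a b <= Dr + n.+1%:R^-1)%R &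
      (p2 (u0, v0) <= \sum_(a <- en S0) \sum_(b <- en S1)
           (if @gbad R V adj u0 v0 a b then 0 else gam a b) + n.+1%:R^-1)%R].
Proof.
pose eps : R := (n.+1%:R^-1 / 2)%R.
have eps0 : (0 < eps)%R by rewrite divr_gt0 // invr_gt0 ltr0n.
have fin1 : W1 adj g0 gs \is a fin_num by rewrite h1.
have [x1 [p1 c1 ex1] hx1] := lb_ereal_inf_adherent eps0 fin1.
have fin3 : W1 adj gt g1 \is a fin_num by rewrite h3.
have [x3 [p3 c3 ex3] hx3] := lb_ereal_inf_adherent eps0 fin3.
have c2 := hp2.1.
have gs0 := pgs.1.
have gt0 := pgt.1.
have row := gG_row g0 gs gt g1 p1 p2 p3 gs0 gt0 c1 c2 c3.
have col := gG_col g0 gs gt g1 p1 p2 p3 gs0 gt0 c1 c2 c3.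
set Gm := gG gs gt p1 p2 p3.
have gwp := gw_ge0 g0 gs gt g1 p1 p2 p3 gs0 gt0 c1 c2 c3.
have Gge0 a b : 0 <= Gm a b.
  by apply: esum_ge0 => q _; rewrite lee_fin.
have Gle0 a b : Gm a b <= (g0 a)%:E.
  rewrite -row; apply: (@esum_term R V [set: V] (fun b => Gm a b)) => //.
have Gle1 a b : Gm a b <= (g1 b)%:E.
  rewrite -col; apply: (@esum_term R V [set: V] (fun a => Gm a b)) => //.
have Gfin a b : Gm a b \is a fin_num.
  by rewrite ge0_fin_numE // (le_lt_trans (Gle0 a b)) // ltry.
pose gam a b := fine (Gm a b).
have gamE a b : (gam a b)%:E = Gm a b by rewrite fineK.
have gam0 a b : (0 <= gam a b)%R by rewrite -lee_fin gamE.
have Gz0 a b : ~ S0 a -> Gm a b = 0.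
  move=> /negP; rewrite negbK => /eqP e; apply/eqP; rewrite eq_le Gge0 andbT.
  by have := Gle0 a b; rewrite e.
have Gz1 a b : ~ S1 b -> Gm a b = 0.
  move=> /negP; rewrite negbK => /eqP e; apply/eqP; rewrite eq_le Gge0 andbT.
  by have := Gle1 a b; rewrite e.
pose gk (k : V * V) := gam k.1 k.2.
have cpl : coupling g0 g1 gk.
  split; first by move=> k; exact: gam0.
  split.
  - by move=> a; rewrite -row; apply: eq_esum => b _; rewrite /gk gamE.
  - by move=> b; rewrite -col; apply: eq_esum => a _; rewrite /gk gamE.
have lbD : Dr%:E <= transport_cost adj gk.
  by rewrite -hD; apply: ereal_inf_lbound; exists gk.
have costE : transport_cost adj gk = \esum_(k in [set: V * V]) (d k.1 k.2 * Gm k.1 k.2).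
  by apply: eq_esum => k _; rewrite /gk gamE.
have gc := glue_cost g0 gs gt g1 p1 p2 p3 gs0 gt0 c1 c2 c3 adj hconn u0 v0.
rewrite -/Gm -costE in gc.
set Bad := \esum_(k in [set: V * V]) _ in gc.
have Bad0 : 0 <= Bad.
  apply: esum_ge0 => k _; case: ifP => // _; rewrite /Qf lee_fin; exact: gwp.
have x1ge0 : 0 <= x1 by rewrite -ex1; apply: esum_ge0 => k _; apply: mule_ge0; [exact: gdist_ge0| rewrite lee_fin; exact: c1.1].
have x3ge0 : 0 <= x3 by rewrite -ex3; apply: esum_ge0 => k _; apply: mule_ge0; [exact: gdist_ge0| rewrite lee_fin; exact: c3.1].
have tot : transport_cost adj p1 + transport_cost adj p2 + transport_cost adj p3 <= (Dr + n.+1%:R^-1)%:E.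
  rewrite ex1 ex3 hp2.2 h2.
  have hx1' : x1 < (al * Dr + eps)%:E by rewrite EFinD -h1.
  have hx3' : x3 < (ce * Dr + eps)%:E by rewrite EFinD -h3.
  have e : (al * Dr + eps + be * Dr + (ce * Dr + eps) = Dr + n.+1%:R^-1)%R.
    rewrite /eps (_ : (al * Dr + n.+1%:R^-1 / 2 + be * Dr + (ce * Dr + n.+1%:R^-1 / 2))%R =
      ((al + be + ce) * Dr + (n.+1%:R^-1 / 2 + n.+1%:R^-1 / 2))%R); last by ring.
    by rewrite hsum mul1r -splitr.
  rewrite -e !EFinD; apply: leeD; [apply: leeD|]; rewrite ?lee_fin //.
  - by rewrite -EFinD; exact: ltW.
  - by rewrite -EFinD; exact: ltW.
have cost_le : transport_cost adj gk + Bad <= (Dr + n.+1%:R^-1)%:E := le_trans gc tot.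
have Dfin : (Dr%:E : \bar R) \is a fin_num by [].
exists gam; split.
- move=> a b; rewrite gam0 /= -lee_fin gamE.
  by apply: (le_trans (Gle0 a b)); rewrite lee_fin; exact: prob_le1.
- move=> a _; apply/eqP; rewrite -eqe -sumEFin.
  under eq_bigr do rewrite gamE.
  rewrite -row (@esum_finsupp R V S1 (fun b => Gm a b)) //.
  by move=> b; exact: Gz1.
- move=> b _; apply/eqP; rewrite -eqe -sumEFin.
  under eq_bigr do rewrite gamE.
  rewrite -col (@esum_finsupp R V S0 (fun a => Gm a b)) //.
  by move=> a; exact: Gz0.
- have : transport_cost adj gk <= (Dr + n.+1%:R^-1)%:E.
    by apply: le_trans cost_le; rewrite leeDl.
  rewrite /transport_cost (esum_pair_fin _ _ _ fs0 fs1).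
  + rewrite (_ : \sum_(a <- _) \sum_(b <- _) _ = (\sum_(a <- en S0) \sum_(b <- en S1)
       (fine (d a b) * gam a b))%:E); first by rewrite lee_fin.
    rewrite -sumEFin; apply: eq_bigr => a _; rewrite -sumEFin; apply: eq_bigr => b _.
    by rewrite [RHS]EFinM -(gdist_fin adj hconn).
  + by move=> k; apply: mule_ge0; [exact: gdist_ge0|rewrite lee_fin gam0].
  + by move=> a b /= h; rewrite /gk /gam /= Gz0 // mule0.
  + by move=> a b /= h; rewrite /gk /gam /= Gz1 // mule0.
- have Bad_le : Bad <= (n.+1%:R^-1)%:E.
    have := le_trans (leeD2r Bad lbD) cost_le.
    by rewrite EFinD leeD2lE.
  set Qu := fun k : V * V => Qf gs gt p1 p2 p3 k.1 k.2 (u0, v0).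
  have M2 : (p2 (u0, v0))%:E = \esum_(k in [set: V * V]) Qu k.
    rewrite -(gw_M2 g0 gs gt g1 p1 p2 p3 gs0 gt0 c1 c2 c3 (u0, v0)) esum_pair //.
    by move=> k; rewrite /Qu /Qf lee_fin.
  have Qu0 k : 0 <= Qu k by rewrite /Qu /Qf lee_fin.
  have spl : \esum_(k in [set: V * V]) Qu k = Bad +
      \esum_(k in [set: V * V]) (if @gbad R V adj u0 v0 k.1 k.2 then 0 else Qu k).
    rewrite /Bad -esumD.
    + by apply: eq_esum => k _; case: ifP => _; rewrite ?adde0 ?add0e.
    + by move=> k _; case: ifP => // _; exact: Qu0.
    + by move=> k _; case: ifP => // _; exact: Qu0.
  have le2 : \esum_(k in [set: V * V]) (if @gbad R V adj u0 v0 k.1 k.2 then 0 else Qu k) <=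
      \esum_(k in [set: V * V]) (if @gbad R V adj u0 v0 k.1 k.2 then 0 else Gm k.1 k.2).
    apply: le_esum => k _; case: ifP => // _.
    rewrite /Qu /Qf /Gm /gG.
    apply: (@esum_term R _ [set: V * V] (fun q => (gw gs gt p1 p2 p3 k.1 k.2 q)%:E)) => //.
    by move=> q; rewrite lee_fin.
  have E2 : \esum_(k in [set: V * V]) (if @gbad R V adj u0 v0 k.1 k.2 then 0 else Gm k.1 k.2) =
     (\sum_(a <- en S0) \sum_(b <- en S1) (if @gbad R V adj u0 v0 a b then 0 else gam a b))%:E.
    rewrite (esum_pair_fin _ _ _ fs0 fs1).
    + rewrite -sumEFin; apply: eq_bigr => a _; rewrite -sumEFin; apply: eq_bigr => b _ /=.
      by case: ifP => _; rewrite ?gamE.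
    + by move=> k; case: ifP.
    + by move=> a b h /=; case: ifP => // _; rewrite Gz0.
    + by move=> a b h /=; case: ifP => // _; rewrite Gz1.
  have := le_trans (leeD Bad_le le2) (lexx _).
  rewrite E2 -spl -M2 -EFinD lee_fin addrC; exact.
Qed.

End approx.

End PF.
Import PF.



Theorem proposition2p14 (R : realType) (V : choiceType) (adj : V -> V -> Prop)
  (adj_sym : forall x y, adj x y -> adj y x)
  (adj_irr : forall x, ~ adj x x)
  (hlf : locally_finite adj) (hconn : connected_graph adj)
  (f : R -> V -> R)
  (hf0 : fin_supp (f 0)) (hf1 : fin_supp (f 1))
  (hgeod : W1_geodesic adj f)
  (s t : R) (hs : 0 <= s) (hst : s <= t) (ht : t <= 1)
  (x y : V) :
  W1_orient adj (f s) (f t) x y -> W1_orient adj (f 0) (f 1) x y.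
Proof.
move=> [axy [u [p [k [geo [[p2 [hp2 pos]] [kp [nx ny]]]]]]]].
set v := last u p in hp2 pos.
have [hprob hW] := hgeod.
have i0 : (0:R) <= (0:R) <= (1:R) by rewrite lexx ler01.
have i1 : (0:R) <= (1:R) <= (1:R) by rewrite lexx ler01.
have is_ : 0 <= s <= 1 by rewrite hs (le_trans hst ht).
have it : 0 <= t <= 1 by rewrite ht (le_trans hs hst).
have Dfin := W1_fin adj hconn _ _ (hprob 0 i0) (hprob 1 i1) hf0 hf1.
set Dr := fine (W1 adj (f 0) (f 1)).
have hD : W1 adj (f 0) (f 1) = Dr%:E by rewrite fineK.
have h1 : W1 adj (f 0) (f s) = (s * Dr)%:E.
  by rewrite hW // subr0 ger0_norm // hD -EFinM.
have h2 : W1 adj (f s) (f t) = ((t - s) * Dr)%:E.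
  by rewrite hW // ger0_norm ?subr_ge0 // hD -EFinM.
have h3 : W1 adj (f t) (f 1) = ((1 - t) * Dr)%:E.
  by rewrite hW // ger0_norm ?subr_ge0 // hD -EFinM.
have hsum : s + (t - s) + (1 - t) = 1 by lra.
have happ := approx adj hconn _ _ _ _ (hprob 0 i0) (hprob s is_) (hprob t it) hf0 hf1 _ _ _ _ hsum hD h1 h3 _ hp2 h2 u v.
have [ga hga] := choice happ.
set S0 := [set z | f 0 z != 0].
set S1 := [set z | f 1 z != 0].
have [g [g0 grow gcol gcost ggood]] := extract _ _ _ _ _ _ _ _ _ ga
  (fun n => let: And5 q _ _ _ _ := hga n in q) (fun n => let: And5 _ q _ _ _ := hga n in q)
  (fun n => let: And5 _ _ q _ _ := hga n in q) (fun n => let: And5 _ _ _ q _ := hga n in q)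
  (fun n => let: And5 _ _ _ _ q := hga n in q).
have fS0 : finite_set S0 := hf0.
have fS1 : finite_set S1 := hf1.
have out0 a : ~ (a \in en S0) -> f 0 a = 0.
  move=> h; apply/eqP; apply/negP => /negP h'; apply: h; exact/(@mem_en V S0 a fS0).
have out1 b : ~ (b \in en S1) -> f 1 b = 0.
  move=> h; apply/eqP; apply/negP => /negP h'; apply: h; exact/(@mem_en V S1 b fS1).
have nin0 a : ~ S0 a -> ~ (a \in en S0) by move=> h /(@mem_en V S0 a fS0).
have nin1 b : ~ S1 b -> ~ (b \in en S1) by move=> h /(@mem_en V S1 b fS1).
pose pst (kk : V * V) := if (kk.1 \in en S0) && (kk.2 \in en S1) then g kk.1 kk.2 else 0.
have pst0 kk : 0 <= pst kk.
  by rewrite /pst; case: ifP => // /andP[ha hb]; exact: g0.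
have cpl : coupling (f 0) (f 1) pst.
  split; first exact: pst0.
  split.
  - move=> a; case ha: (a \in en S0).
    + rewrite (@esum_finsupp R V S1 (fun b => (pst (a, b))%:E)) //.
      * rewrite sumEFin -grow //; congr (_%:E); apply: eq_big_seq => b hb.
        by rewrite /pst /= ha hb.
      * by move=> b; rewrite lee_fin.
      * by move=> b /nin1 /negP /negbTE hb; rewrite /pst /= hb andbF.
    + rewrite out0; last by rewrite ha.
      by apply: esum1 => b _; rewrite /pst /= ha.
  - move=> b; case hb: (b \in en S1).
    + rewrite (@esum_finsupp R V S0 (fun a => (pst (a, b))%:E)) //.
      * rewrite sumEFin -gcol //; congr (_%:E); apply: eq_big_seq => a ha.
        by rewrite /pst /= ha hb.
      * by move=> a; rewrite lee_fin.
      * by move=> a /nin0 /negP /negbTE ha; rewrite /pst /= ha.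
    + rewrite out1; last by rewrite hb.
      by apply: esum1 => a _; rewrite /pst /= hb andbF.
have cost_le : (transport_cost adj pst <= Dr%:E)%E.
  rewrite /transport_cost (esum_pair_fin _ _ _ hf0 hf1).
  - rewrite (_ : \sum_(a <- _) \sum_(b <- _) _ = (\sum_(a <- en S0) \sum_(b <- en S1)
       (fine (gdist adj a b) * g a b))%:E); first by rewrite lee_fin.
    rewrite -sumEFin; apply: eq_big_seq => a ha; rewrite -sumEFin; apply: eq_big_seq => b hb.
    by rewrite [RHS]EFinM -(gdist_fin adj hconn) /pst /= ha hb.
  - by move=> kk; apply: mule_ge0; [exact: gdist_ge0|rewrite lee_fin].
  - by move=> a b /nin0 /negP /negbTE ha; rewrite /pst /= ha mule0.
  - by move=> a b /nin1 /negP /negbTE hb; rewrite /pst /= hb andbF mule0.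
have opt : optimal_coupling adj (f 0) (f 1) pst.
  split; first exact: cpl.
  apply: le_anti; apply/andP; split; first by rewrite hD.
  by apply: ereal_inf_lbound; exists pst.
have [a [b [ha hb hpos]]] : exists a b, [/\ a \in en S0, b \in en S1 &
    0 < (if @gbad R V adj u v a b then 0 else g a b)].
  apply: contrapT => hn.
  have hle : \sum_(a <- en S0) \sum_(b <- en S1) (if @gbad R V adj u v a b then 0 else g a b) <= 0.
    rewrite big_seq; apply: sumr_le0 => a ha; rewrite big_seq; apply: sumr_le0 => b hb.
    rewrite leNgt; apply/negP => h; apply: hn; by exists a, b.
  have := lt_le_trans pos (le_trans ggood hle); by rewrite ltxx.
move: hpos; case: ifP => [_|]; first by rewrite ltxx.
move=> /negbT; rewrite /gbad negbK => /eqP dab gpos.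
have hopt : opt_support adj (f 0) (f 1) a b.
  by exists pst; split => //; rewrite /pst /= ha hb.
have [sa [wa la da]] := @gdist_geo R V adj hconn a u.
have [sb [wb lb db]] := @gdist_geo R V adj hconn v b.
have [gq lq nq] := geo_concat adj a u p b sa sb wa la da geo wb lb db dab.
split => //.
exists a, (sa ++ p ++ sb), (size sa + k)%N; split => //.
split; first by rewrite lq.
split; first by rewrite !size_cat ltn_add2l (leq_trans kp) // leq_addr.
split; first by rewrite nq ?nx // ltnW.
by rewrite -addnS nq.
Qed.
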